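(* Let $\mathbf{C}$ be a covering of a finite nonempty set $U$. Then $\mathbf{C}$ is an invariable covering if and only if every $x\in U$ has a core block in $\mathbf{C}$ and every $K\in\mathbf{C}$ is the core block of at least one element of $U$.
   Context: A covering of $U$ is a family (set) $\mathbf{C}$ of subsets of $U$ with $\emptyset\notin\mathbf{C}$ and $\bigcup\mathbf{C}=U$; its elements are called blocks. The membership repeat degree of $x\in U$ is $\partial(x)=|\{K\in\mathbf{C}: x\in K\}|$. The common block repeat degree of $(x,y)\in U\times U$ is $\lambda(x,y)=|\{K\in\mathbf{C}: \{x,y\}\subseteq K\}|$. A block $K\in\mathbf{C}$ is a core block of $x\in U$ if $x\in K$ and $\lambda(x,y)=\partial(x)$ for every $y\in K$. A block $K\in\mathbf{C}$ is a reducible element of $\mathbf{C}$ if $K$ is the union of some subfamily of $\mathbf{C}\setminus\{K\}$; otherwise it is irreducible. $\mathbf{C}$ is irreducible if all its blocks are irreducible elements. $\mathbf{C}$ is an invariable covering if $\mathbf{C}$ is irreducible and every $x\in U$ has a core block in $\mathbf{C}$. *)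

(* Defs.v *)
From mathcomp Require Import all_boot.
Set Implicit Arguments. Unset Strict Implicit. Unset Printing Implicit Defensive.

Section Coverings.
Variable T : finType.

Definition is_covering (U : {set T}) (C : {set {set T}}) : Prop :=
  set0 \notin C /\ cover C = U.

Definition mrd (C : {set {set T}}) (x : T) : nat := #|[set K in C | x \in K]|.

Definition cbrd (C : {set {set T}}) (x y : T) : nat :=
  #|[set K in C | (x \in K) && (y \in K)]|.

Definition core_block (C : {set {set T}}) (x : T) (K : {set T}) : Prop :=
  K \in C /\ x \in K /\ forall y, y \in K -> cbrd C x y = mrd C x.

Definition reducible_elem (C : {set {set T}}) (K : {set T}) : Prop :=
  K \in C /\ exists F : {set {set T}}, F \subset C :\ K /\ cover F = K.

Definition irreducible_cov (C : {set {set T}}) : Prop :=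
  forall K, K \in C -> ~ reducible_elem C K.

Definition invariable_covering (U : {set T}) (C : {set {set T}}) : Prop :=
  irreducible_cov C /\ forall x, x \in U -> exists K, core_block C x K.

End Coverings.

(* Main.v *)
Require Import Defs.
From mathcomp Require Import all_boot.
Set Implicit Arguments. Unset Strict Implicit. Unset Printing Implicit Defensive.

Section H.
Variable T : finType.
Variable C : {set {set T}}.

Definition cbb (x : T) (K : {set T}) : bool :=
  [&& K \in C, x \in K & [forall L in C, (x \in L) ==> (K \subset L)]].

Lemma cbP x K : reflect (core_block C x K) (cbb x K).
Proof.
apply: (iffP and3P) => [[KC xK /forall_inP H]|[KC [xK H]]].
  split=> //; split=> // y yK; rewrite /cbrd /mrd; apply: eq_card => L; rewrite !inE.
  case LC: (L \in C) => //=; case xL: (x \in L) => //=.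
  by move: (H L LC); rewrite xL => /implyP/(_ isT)/subsetP/(_ y yK) ->.
split=> //; apply/forall_inP => L LC; apply/implyP => xL.
apply/subsetP => y yK.
have E := H y yK.
have sub : [set K0 in C | (x \in K0) && (y \in K0)] \subset [set K0 in C | x \in K0].
  by apply/subsetP => M; rewrite !inE => /andP[-> /andP[-> _]].
have : [set K0 in C | (x \in K0) && (y \in K0)] == [set K0 in C | x \in K0].
  by rewrite eqEcard sub /=; move: E; rewrite /cbrd /mrd => ->.
move/eqP/setP/(_ L); rewrite !inE LC xL /=.
by move=> ->.
Qed.

End H.

Theorem proposition22 (T : finType) (U : {set T}) (C : {set {set T}}) :
  U != set0 ->
  is_covering U C ->
  (invariable_covering U C <->
   ((forall x, x \in U -> exists K, core_block C x K) /\
    (forall K, K \in C -> exists2 x, x \in U & core_block C x K))).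
Proof.
move=> _ [C0 cov]; split.
  move=> [irr ex]; split=> // K KC.
  case: (boolP [exists x in U, cbb C x K]).
    by move/exists_inP => [x xU /cbP]; exists x.
  move/exists_inP => nex; exfalso.
  set N := fun x => odflt set0 [pick M | cbb C x M].
  have NP : forall x, x \in U -> cbb C x (N x).
    move=> x xU; rewrite /N; case: pickP => [M //|none].
    by have [M /cbP] := ex x xU; rewrite none.
  have KU : forall x, x \in K -> x \in U.
    by move=> x xK; rewrite -cov; apply/bigcupP; exists K.
  apply: (irr K KC); split=> //; exists [set N x | x in K]; split.
    apply/subsetP => M /imsetP[x xK ->]; have := NP x (KU x xK).
    case/and3P => NC _ _; rewrite !inE NC andbT.
    apply/negP => /eqP E; apply: nex; exists x; first exact: KU.
    by rewrite -E; apply: NP; apply: KU.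
  apply/setP => y; apply/bigcupP/idP.
    move=> [M /imsetP[x xK ->]]; have := NP x (KU x xK).
    case/and3P => _ _ /forall_inP /(_ K KC); rewrite xK /= => /subsetP; apply.
  move=> yK; exists (N y); first by apply/imsetP; exists y.
  by case/and3P: (NP y (KU y yK)).
move=> [ex cb]; split=> // K KC [_ [F [FS cF]]].
have [x xU /cbP /and3P [_ xK /forall_inP H]] := cb K KC.
move: xK; rewrite -{1}cF => /bigcupP [L LF xL].
move/subsetP: FS => /(_ L LF); rewrite !inE => /andP [LK LC].
move: (H L LC); rewrite xL /= => KL.
have LsK : L \subset K by rewrite -cF; apply: bigcup_sup.
by move: LK; rewrite eqEsubset LsK KL.
Qed.
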